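(* For every $n\ge1$ there is a bijection $A\mapsto M$ from the set of admissible sets in $\{1,3,\dots,2n+1\}$ onto the set of Motzkin paths of length $n$ such that the weight of $A$, namely $\big(\prod_{i=1}^{2n}[a(i)]_q\big)t^{(|A|-1)/2}$, equals the weight $\rho(M)$ (product of step weights) of $M$, where an up step at height $h\ge0$ has weight $[h+1]_q[h+2]_q\,t$, a level step at height $h\ge0$ has weight $[h+1]_q^2$, and a down step at height $h\ge1$ has weight $[h+1]_q[h]_q$.
   Context: $[k]_q=1+q+\cdots+q^{k-1}$. An admissible set in $\{1,3,\dots,2n+1\}$ is a set $A$ of odd numbers in $\{1,3,\dots,2n+1\}$, each colored white or black, such that: (i) $A$ has $k$ white and $k+1$ black elements for some $k\ge0$, and $2n+1$ is black; (ii) for each $i\in[2n]$, $A\cap\{1,\dots,i\}$ has at least as many white as black elements. Its vector is $a(i)=f(i)-g(i)+1$ ($1\le i\le 2n$), where $f(i)$ (resp. $g(i)$) is the number of white (resp. black) elements of $A$ less than $i$. A Motzkin path of length $n$ is a lattice path from $(0,0)$ to $(n,0)$ staying weakly above the $x$-axis with steps up $(1,1)$, down $(1,-1)$, level $(1,0)$; the height of a step is the $y$-coordinate of its starting point. *)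

(* Defs.v *)
From HB Require Import structures.
From mathcomp Require Import all_boot all_order all_algebra.
Set Implicit Arguments. Unset Strict Implicit. Unset Printing Implicit Defensive.
Import GRing.Theory.
Local Open Scope ring_scope.

(* Weights live in Z[q][t] = {poly {poly int}}: the outer variable is t = 'X,
   q is the constant polynomial ('X)%:P. *)
Definition qint (k : nat) : {poly int} := \sum_(m < k) 'X^m.
Definition Q : {poly {poly int}} := ('X : {poly int})%:P.
Definition T : {poly {poly int}} := 'X.
Definition qintT (k : nat) : {poly {poly int}} := (qint k)%:P.

(* A colored subset of {1,3,...,2n+1}: index j : 'I_(n+1) stands for the odd
   number 2j+1; None = not in A, Some true = white, Some false = black. *)
Definition colset (n : nat) := {ffun 'I_n.+1 -> option bool}.

Definition fA n (A : colset n) (i : nat) : nat :=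
  #|[set j : 'I_n.+1 | (A j == Some true) && ((2 * j).+1 < i)%N]|.
Definition gA n (A : colset n) (i : nat) : nat :=
  #|[set j : 'I_n.+1 | (A j == Some false) && ((2 * j).+1 < i)%N]|.

Definition nwhite n (A : colset n) : nat := #|[set j | A j == Some true]|.
Definition nblack n (A : colset n) : nat := #|[set j | A j == Some false]|.

Definition admissible n (A : colset n) : Prop :=
  nblack A = (nwhite A).+1 /\ A ord_max = Some false /\
  (forall i : nat, (1 <= i <= 2 * n)%N ->
     (#|[set j : 'I_n.+1 | (A j == Some false) && ((2 * j).+1 <= i)%N]|
      <= #|[set j : 'I_n.+1 | (A j == Some true) && ((2 * j).+1 <= i)%N]|)%N).

(* a(i) = f(i) - g(i) + 1 (nonnegative for admissible A) *)
Definition avec n (A : colset n) (i : nat) : nat := (fA A i + 1 - gA A i)%N.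

(* |A| = 2k+1, so (|A|-1)/2 = k = number of white elements *)
Definition weightA n (A : colset n) : {poly {poly int}} :=
  (\prod_(1 <= i < (2 * n).+1) qintT (avec A i)) * T ^+ nwhite A.

Inductive step := Up | Lev | Down.

Fixpoint valid_from (h : nat) (M : seq step) : bool :=
  match M with
  | [::] => h == 0%N
  | Up :: M' => valid_from h.+1 M'
  | Lev :: M' => valid_from h M'
  | Down :: M' => (0 < h)%N && valid_from h.-1 M'
  end.

Definition motzkin (n : nat) (M : seq step) : Prop :=
  size M = n /\ valid_from 0 M.

Fixpoint rho_from (h : nat) (M : seq step) : {poly {poly int}} :=
  match M with
  | [::] => 1
  | Up :: M' => qintT h.+1 * qintT h.+2 * T * rho_from h.+1 M'
  | Lev :: M' => qintT h.+1 ^+ 2 * rho_from h M'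
  | Down :: M' => qintT h.+1 * qintT h * rho_from h.-1 M'
  end.

Definition rho (M : seq step) : {poly {poly int}} := rho_from 0 M.

(* Main.v *)
Require Import Defs.
From mathcomp Require Import all_boot all_order all_algebra zify ring.
Set Implicit Arguments. Unset Strict Implicit. Unset Printing Implicit Defensive.

Lemma card_count (T0 : finType) (Q : pred T0) : #|[set j | Q j]| = count Q (enum T0).
Proof.
rewrite cardsE cardE /enum_mem size_filter -enumT.
rewrite count_filter; apply: eq_count => x; by rewrite /= andbT.
Qed.

Lemma card_cnt n (A : colset n) (c : option bool) (Q : pred 'I_n.+1) k :
  k <= n.+1 -> (forall j : 'I_n.+1, Q j = (A j == c) && (j < k)) ->
  #|[set j | Q j]| = count (pred1 c) [seq A (inord j) | j <- iota 0 k].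
Proof.
move=> hk hQ; rewrite card_count.
rewrite (eq_count hQ).
have -> : count (fun j : 'I_n.+1 => (A j == c) && (j < k)) (enum 'I_n.+1)
   = count (fun x => (A (inord x) == c) && (x < k)) (map val (enum 'I_n.+1)).
  rewrite count_map; apply: eq_count => j /=; by rewrite inord_val.
rewrite val_enum_ord.
have -> : iota 0 n.+1 = iota 0 k ++ iota k (n.+1 - k) by rewrite -{1}(subnKC hk) iotaD.
rewrite count_cat.
rewrite (@eq_in_count _ _ pred0 (iota k _)); last first.
  by move=> x; rewrite mem_iota => /andP [h _] /=; rewrite ltnNge h andbF.
rewrite count_pred0 addn0 count_map; apply: eq_in_count => x.
by rewrite mem_iota /= => ->; rewrite andbT.
Qed.

Definition isUp (x : step) := if x is Up then true else false.
Definition isDn (x : step) := if x is Down then true else false.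

Lemma valid_iff h M : valid_from h M <->
  (forall k, count isDn (take k M) <= h + count isUp (take k M))
  /\ h + count isUp M = count isDn M.
Proof.
elim: M h => [|x M IH] h /=.
  split; first by move/eqP=> ->; split => // k; rewrite take_nil.
  by case=> _; rewrite addn0 => ->.
case: x => /=.
- rewrite IH; split.
  + case=> H1 H2; split; last by lia.
    by case=> [|k] //=; have := H1 k; lia.
  + case=> H1 H2; split; last by lia.
    by move=> k; have := H1 k.+1; rewrite /=; lia.
- rewrite IH; split.
  + case=> H1 H2; split; last by lia.
    by case=> [|k] //=; have := H1 k; lia.
  + case=> H1 H2; split; last by lia.
    by move=> k; have := H1 k.+1; rewrite /=; lia.
- case: h => [|h].
    split; first by [].
    by case=> H1 _; have := H1 1; rewrite /= take0.
  rewrite /=. split.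
  + move=> /IH [H1 H2]; split; last by lia.
    by case=> [|k] //=; have := H1 k; lia.
  + case=> H1 H2.
    apply/IH; split; last by lia.
    by move=> k; have := H1 k.+1; rewrite /=; lia.
Qed.

Definition htc h (M : seq step) k :=
  h + count isUp (take k M) - count isDn (take k M).

Definition stp h x := match x with Up => h.+1 | Lev => h | Down => h.-1 end.

Lemma htc_cons h x M k : (x = Down -> 0 < h) ->
  htc h (x :: M) k.+1 = htc (stp h x) M k.
Proof. rewrite /htc /=; case: x => /= H; try lia. have := H erefl; lia. Qed.

Lemma htc0 h M : htc h M 0 = h.
Proof. by rewrite /htc take0 /= addn0 subn0. Qed.

Definition tostep (o : option bool) : step :=
  match o with Some true => Up | Some false => Down | None => Lev end.
Definition fromstep (x : step) : option bool :=
  match x with Up => Some true | Down => Some false | Lev => None end.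

Lemma tostepK : cancel fromstep tostep. Proof. by case. Qed.
Lemma tostep_inj : injective tostep.
Proof. by case=> [[]|] [[]|]. Qed.

Definition sA n (A : colset n) := [seq A (inord j) | j <- iota 0 n].
Definition fmap n (A : colset n) := map tostep (sA A).

Lemma count_U s : count isUp (map tostep s) = count (pred1 (Some true)) s.
Proof. by rewrite count_map; apply: eq_count => [[[]|]]. Qed.
Lemma count_D s : count isDn (map tostep s) = count (pred1 (Some false)) s.
Proof. by rewrite count_map; apply: eq_count => [[[]|]]. Qed.

Lemma size_fmap n (A : colset n) : size (fmap A) = n.
Proof. by rewrite /fmap /sA !size_map size_iota. Qed.

Lemma take_fmap n (A : colset n) k : k <= n ->
  take k (fmap A) = map tostep [seq A (inord j) | j <- iota 0 k].
Proof. by move=> hk; rewrite /fmap /sA -!map_take take_iota (minn_idPl hk). Qed.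

Lemma full_seq n (A : colset n) :
  [seq A (inord j) | j <- iota 0 n.+1] = rcons (sA A) (A ord_max).
Proof.
have -> : iota 0 n.+1 = iota 0 n ++ [:: n] by rewrite -addn1 iotaD.
rewrite map_cat -cats1 /sA /=; congr (_ ++ [:: A _]).
by apply: val_inj; rewrite /= inordK.
Qed.

Lemma cntU n (A : colset n) k (Q : pred 'I_n.+1) : k <= n ->
  (forall j : 'I_n.+1, Q j = (A j == Some true) && (j < k)) ->
  #|[set j | Q j]| = count isUp (take k (fmap A)).
Proof.
move=> hk hQ; rewrite (card_cnt (c := Some true) _ hQ) ?take_fmap ?count_U //.
exact: leqW.
Qed.

Lemma cntD n (A : colset n) k (Q : pred 'I_n.+1) : k <= n ->
  (forall j : 'I_n.+1, Q j = (A j == Some false) && (j < k)) ->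
  #|[set j | Q j]| = count isDn (take k (fmap A)).
Proof.
move=> hk hQ; rewrite (card_cnt (c := Some false) _ hQ) ?take_fmap ?count_D //.
exact: leqW.
Qed.

Lemma nwhiteE n (A : colset n) : A ord_max = Some false ->
  nwhite A = count isUp (fmap A).
Proof.
move=> hA; rewrite /nwhite (@card_cnt n A (Some true) (fun j => A j == Some true) n.+1) //.
  by rewrite full_seq -cats1 count_cat hA /= !addn0 /fmap count_U.
by move=> j; rewrite ltn_ord andbT.
Qed.

Lemma nblackE n (A : colset n) : A ord_max = Some false ->
  nblack A = (count isDn (fmap A)).+1.
Proof.
move=> hA; rewrite /nblack (@card_cnt n A (Some false) (fun j => A j == Some false) n.+1) //.
  by rewrite full_seq -cats1 count_cat hA /= addn0 addn1 /fmap count_D.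
by move=> j; rewrite ltn_ord andbT.
Qed.

Lemma beq (b1 b2 : bool) : (b1 -> b2) -> (b2 -> b1) -> b1 = b2.
Proof. by case: b1; case: b2 => // H1 H2; [have := H1 isT | have := H2 isT]. Qed.

Lemma adm_valid n (A : colset n) : admissible A -> valid_from 0 (fmap A).
Proof.
case=> hbw [hmax hii].
have tot : count isUp (fmap A) = count isDn (fmap A).
  by move: hbw; rewrite nwhiteE // nblackE // => -[].
apply/valid_iff; split; last by rewrite add0n.
move=> k; rewrite add0n.
case: (leqP k n) => hk; last first.
  by rewrite take_oversize ?size_fmap ?tot // ltnW.
case: k hk => [|k] hk; first by rewrite take0.
have := hii (2 * k).+1.
have E1 : #|[set j : 'I_n.+1 | (A j == Some false) && ((2 * j).+1 <= (2 * k).+1)%N]|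
  = count isDn (take k.+1 (fmap A)).
  by apply: cntD => // j; congr andb; apply: beq => ?; lia.
have E2 : #|[set j : 'I_n.+1 | (A j == Some true) && ((2 * j).+1 <= (2 * k).+1)%N]|
  = count isUp (take k.+1 (fmap A)).
  by apply: cntU => // j; congr andb; apply: beq => ?; lia.
rewrite E1 E2; apply; apply/andP; split => //; lia.
Qed.

Lemma valid_adm n (A : colset n) : A ord_max = Some false -> valid_from 0 (fmap A) ->
  admissible A.
Proof.
move=> hmax /valid_iff [H1 H2]; split; last split => //.
  by rewrite nwhiteE // nblackE // -H2.
move=> i /andP [hi1 hi2].
have hk : i.+1 %/ 2 <= n by lia.
have E1 : #|[set j : 'I_n.+1 | (A j == Some false) && ((2 * j).+1 <= i)%N]|
  = count isDn (take (i.+1 %/ 2) (fmap A)).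
  by apply: cntD => // j; congr andb; apply: beq => ?; lia.
have E2 : #|[set j : 'I_n.+1 | (A j == Some true) && ((2 * j).+1 <= i)%N]|
  = count isUp (take (i.+1 %/ 2) (fmap A)).
  by apply: cntU => // j; congr andb; apply: beq => ?; lia.
by rewrite E1 E2; have := H1 (i.+1 %/ 2).
Qed.
Local Open Scope ring_scope.
Import GRing.Theory.

Lemma rho_prod h M : valid_from h M ->
  rho_from h M = (\prod_(j < size M) (qintT (htc h M j).+1 * qintT (htc h M j.+1).+1))
     * T ^+ count isUp M.
Proof.
elim: M h => [|x M IH] h /=.
  by move=> _; rewrite big_ord0 mul1r.
rewrite big_ord_recl htc0.
have Hd : forall h', x = Down -> valid_from h' (x :: M) -> (0 < h')%N.
  by move=> h' -> /= /andP [].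
move=> V.
have E : \prod_(i < size M) (qintT (htc h (x :: M) (lift ord0 i)).+1 *
          qintT (htc h (x :: M) (lift ord0 i).+1).+1)
   = \prod_(i < size M) (qintT (htc (stp h x) M i).+1 * qintT (htc (stp h x) M i.+1).+1).
  apply: eq_bigr => i _; rewrite lift0 !htc_cons //; by move=> e; exact: (Hd h e V).
rewrite E htc_cons; last by move=> e; exact: (Hd h e V).
rewrite htc0.
case: x V {E Hd} => /= V.
- rewrite IH // exprS; ring.
- rewrite IH // add0n; ring.
- case/andP: V => hp V; rewrite IH // add0n prednK //; ring.
Qed.

Lemma prod_pair (F : nat -> {poly {poly int}}) n :
  \prod_(1 <= i < (2 * n).+1) F i = \prod_(j < n) (F (2 * j).+1%N * F (2 * j).+2%N).
Proof.
elim: n => [|n IH]; first by rewrite big_ord0 big_geq.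
have -> : (2 * n.+1).+1%N = ((2 * n).+1).+2%N by rewrite mulnS.
rewrite big_nat_recr // big_nat_recr // IH big_ord_recr /= mulrA.
by [].
Qed.

Lemma weight_ok n (A : colset n) : admissible A -> weightA A = rho (fmap A).
Proof.
move=> hA; have V := adm_valid hA; case: hA => _ [hmax _].
rewrite /weightA /rho rho_prod // size_fmap nwhiteE //; congr (_ * _).
rewrite prod_pair; apply: eq_bigr => j _.
have hj : (j < n)%N := ltn_ord j.
case/valid_iff: V => H1 _.
have E1 : #|[set x : 'I_n.+1 | (A x == Some true) && ((2 * x).+1 < (2 * j).+1)%N]|
  = count isUp (take j (fmap A)).
  by apply: cntU; [exact: ltnW | move=> x; congr andb; apply: beq => ?; lia].
have E2 : #|[set x : 'I_n.+1 | (A x == Some false) && ((2 * x).+1 < (2 * j).+1)%N]|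
  = count isDn (take j (fmap A)).
  by apply: cntD; [exact: ltnW | move=> x; congr andb; apply: beq => ?; lia].
have E3 : #|[set x : 'I_n.+1 | (A x == Some true) && ((2 * x).+1 < (2 * j).+2)%N]|
  = count isUp (take j.+1 (fmap A)).
  by apply: cntU => // x; congr andb; apply: beq => ?; lia.
have E4 : #|[set x : 'I_n.+1 | (A x == Some false) && ((2 * x).+1 < (2 * j).+2)%N]|
  = count isDn (take j.+1 (fmap A)).
  by apply: cntD => // x; congr andb; apply: beq => ?; lia.
rewrite /avec /fA /gA E1 E2 E3 E4 /htc.
have := H1 j; have := H1 j.+1; rewrite !add0n => h1 h2.
by rewrite !addn1 !subSn.
Qed.

Lemma nth_fmap n (A : colset n) j : (j < n)%N -> nth Lev (fmap A) j = tostep (A (inord j)).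
Proof.
move=> hj; rewrite /fmap /sA (nth_map None) ?size_map ?size_iota //.
by rewrite (nth_map 0%N) ?size_iota // nth_iota.
Qed.

Theorem mainTheorem8 (n : nat) (hn : (1 <= n)%N) :
  exists f : colset n -> seq step,
    (forall A, admissible A -> motzkin n (f A)) /\
    (forall A B, admissible A -> admissible B -> f A = f B -> A = B) /\
    (forall M, motzkin n M -> exists2 A, admissible A & f A = M) /\
    (forall A, admissible A -> weightA A = rho (f A)).
Proof.
exists (@fmap n); split; [|split; [|split]].
- by move=> A hA; split; [exact: size_fmap | exact: adm_valid].
- move=> A B hA hB E; apply/ffunP => j.
  case: (ltnP j n) => hj.
    have := congr1 (fun s => nth Lev s j) E; rewrite /= !nth_fmap //.
    by rewrite inord_val => /tostep_inj.
  have -> : j = ord_max by apply: val_inj; rewrite /=; have := ltn_ord j; lia.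
  by case: hA => _ [-> _]; case: hB => _ [-> _].
- move=> M [hs V].
  pose A : colset n := [ffun j : 'I_n.+1 => if (j < n)%N then fromstep (nth Lev M j) else Some false].
  have EA : fmap A = M.
    apply: (@eq_from_nth _ Lev); first by rewrite size_fmap hs.
    move=> j; rewrite size_fmap => hj.
    by rewrite nth_fmap // ffunE inordK ?hj ?tostepK // ltnW.
  exists A => //; apply: valid_adm; last by rewrite EA.
  by rewrite ffunE /= ltnn.
- exact: weight_ok.
Qed.
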